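(* Let $u$ be a fast decreasing distribution on $\mathbb R^D$ (acting on $\mathbb C[\boldsymbol x]$) and $\mathcal Q_1,\mathcal Q_2\in\mathbb C[\boldsymbol x]$ coprime of degrees $m_1,m_2$ with $Z(\mathcal Q_2)\cap\operatorname{supp}u=\varnothing$. Let $\check u$ be a linear functional with $\mathcal Q_2\check u=u$ and put $\hat u=\mathcal Q_1\check u$ (so $\mathcal Q_2\hat u=\mathcal Q_1u$); assume $u$ and $\hat u$ quasi-definite, and let $R=\langle\check u,P(\boldsymbol x)\chi(\boldsymbol x)^\top\rangle$. Fix $k\in\mathbb Z_+$ and distinct nodes $\boldsymbol p_1,\dots,\boldsymbol p_{r_1}\in Z(\mathcal Q_1)$, $r_1=N_{k+m_1-1}-N_{k-1}$, and let $F=\big(\mathcal Q_1(\boldsymbol\Lambda)\big)_{[k],[k+m_1]}$. (i) If the matrix with block rows $\big(R_{[l],[0]},\dots,R_{[l],[k-1]},P_{[l]}(\boldsymbol p_1),\dots,P_{[l]}(\boldsymbol p_{r_1})\big)$, $l=0,\dots,k+m_1-1$, is nonsingular (this is the poisedness condition when $k<m_2$), then $$\hat P_{[k]}(\boldsymbol x)=\frac{F}{\mathcal Q_1(\boldsymbol x)}\Theta_*\begin{pmatrix}R_{[0],[0]}&\cdots&R_{[0],[k-1]}&P_{[0]}(\boldsymbol p_1)&\cdots&P_{[0]}(\boldsymbol p_{r_1})&P_{[0]}(\boldsymbol x)\\ \vdots&&\vdots&\vdots&&\vdots&\vdots\\ R_{[k+m_1],[0]}&\cdots&R_{[k+m_1],[k-1]}&P_{[k+m_1]}(\boldsymbol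 p_1)&\cdots&P_{[k+m_1]}(\boldsymbol p_{r_1})&P_{[k+m_1]}(\boldsymbol x)\end{pmatrix}$$ and $\hat H_{[k]}=F\,\Theta_*(\cdots)$ where the matrix is the same with last column $R_{[l],[k]}$ ($l=0,\dots,k+m_1$) in place of $P_{[l]}(\boldsymbol x)$. (ii) If $k\ge m_2$ and $\mathcal M_k=\{\boldsymbol\beta_1,\dots,\boldsymbol\beta_{r_2}\}$, $r_2=N_{k-1}-N_{k-m_2-1}$, are distinct multi-indices with $|\boldsymbol\beta_i|<k$ such that the set $\mathcal M_k\cup\{\boldsymbol p_j\}$ is poised, i.e. the matrix with block rows $\big(R_{[l],\boldsymbol\beta_1},\dots,R_{[l],\boldsymbol\beta_{r_2}},P_{[l]}(\boldsymbol p_1),\dots,P_{[l]}(\boldsymbol p_{r_1})\big)$, $l=k-m_2,\dots,k+m_1-1$, is nonsingular, then $$\hat P_{[k]}(\boldsymbol x)=\frac{F}{\mathcal Q_1(\boldsymbol x)}\Theta_*\begin{pmatrix}R_{[k-m_2],\boldsymbol\beta_1}&\cdots&R_{[k-m_2],\boldsymbol\beta_{r_2}}&P_{[k-m_2]}(\boldsymbol p_1)&\cdots&P_{[k-m_2]}(\boldsymbol p_{r_1})&P_{[k-m_2]}(\boldsymbol x)\\ \vdots&&\vdots&\vdots&&\vdots&\vdots\\ R_{[k+m_1],\boldsymbol\beta_1}&\cdots&R_{[k+m_1],\boldsymbol\beta_{r_2}}&P_{[k+m_1]}(\boldsymbol p_1)&\cdots&P_{[k+m_1]}(\boldsymbol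 p_{r_1})&P_{[k+m_1]}(\boldsymbol x)\end{pmatrix},$$ $\hat H_{[k]}\big((\mathcal Q_2(\boldsymbol\Lambda))_{[k-m_2],[k]}\big)^\top=F\,\Theta_*(\cdots)$ with the same matrix but last column $(H_{[k-m_2]},0,\dots,0)^\top$ (block rows $l=k-m_2,\dots,k+m_1$), and $\hat H_{[k]}=F\,\Theta_*(\cdots)$ with the same matrix but last column $R_{[l],[k]}$, $l=k-m_2,\dots,k+m_1$.
   Context: $[k]=\{\boldsymbol\alpha\in\mathbb Z_+^D:|\boldsymbol\alpha|=k\}$, $N_k=\binom{D+k}{D}=\sum_{j\le k}|[j]|$, $N_{-1}=0$. Multi-indices ordered by graded lexicographic order; $\chi(\boldsymbol x)$ vector of monomials in this order with blocks $\chi_{[k]}$; semi-infinite matrices have blocks $A_{[k],[l]}$; $A_{[l],\boldsymbol\beta}$ is the column of block row $[l]$ indexed by $\boldsymbol\beta$. $Z(\mathcal Q)\subset\mathbb C^D$ is the zero set of $\mathcal Q$. Spectral matrices $(\Lambda_a)_{\boldsymbol\alpha,\boldsymbol\beta}=\delta_{\boldsymbol\alpha+\boldsymbol e_a,\boldsymbol\beta}$, $\mathcal Q(\boldsymbol\Lambda)=\mathcal Q(\Lambda_1,\dots,\Lambda_D)$. For a linear functional $u$, $\langle Qu,P\rangle:=\langle u,QP\rangle$; moment matrix $G=\langle u,\chi\chi^\top\rangle$; quasi-definite: all block truncations nonsingular; then $G=S^{-1}HS^{-\top}$ with $S$ block lower unitriangular, $H$ block diagonal with blocks $H_{[k]}$;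 $P=S\chi$ with blocks $P_{[k]}$ are the monic multivariate orthogonal polynomials. Hatted symbols refer to $\hat u$. Last quasi-determinant: $\Theta_*\begin{pmatrix}A&B\\C&D\end{pmatrix}=D-CA^{-1}B$ with last displayed block row/column. *)

(* Defs.v *)
From HB Require Import structures.
From mathcomp Require Import all_boot all_order all_algebra.
From mathcomp Require Import mpoly.
From mathcomp Require Import all_classical all_reals all_analysis.
From mathcomp Require Import complex.

Set Implicit Arguments.
Unset Strict Implicit.
Unset Printing Implicit Defensive.

Import Order.TTheory GRing.Theory Num.Theory.
Import numFieldNormedType.Exports.
Local Open Scope ring_scope.

(* All sequences of D naturals summing to k, in decreasing lexicographic order
   (first variable first): for k = 1 this gives e_1, e_2, ..., e_D, so that
   chi = (1, x1, ..., xD, x1^2, x1 x2, ...). *)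
Fixpoint glex_seq (D k : nat) : seq (seq nat) :=
  match D with
  | 0 => if k == 0%N then [:: [::]] else [::]
  | D'.+1 => flatten [seq [seq (k - a)%N :: s | s <- glex_seq D' a]
                     | a <- iota 0 k.+1]
  end.

Definition mi_of_seq (D : nat) (s : seq nat) : 'X_{1..D} :=
  [multinom nth 0%N s i | i < D].

Definition blk (D k : nat) : seq 'X_{1..D} := map (@mi_of_seq D) (glex_seq D k).
Definition bsz (D k : nat) : nat := size (blk D k).
(* all multi-indices alpha with |alpha| < n, in graded-lex order;
   its size is N_{n-1} (with N_{-1} = 0) *)
Definition low (D n : nat) : seq 'X_{1..D} :=
  flatten [seq blk D j | j <- iota 0 n].
Definition mid (D a b : nat) : seq 'X_{1..D} :=
  flatten [seq blk D j | j <- iota a (b - a)].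
(* Nm1 D k = N_{k-1} = sum_{j < k} |[j]| *)
Definition Nm1 (D k : nat) : nat := size (low D k).

Section Algebraic.
Variable R : rcfType.
Local Notation C := (complex R).
Variable D : nat.
Local Notation Pol := (mpoly D C).
Local Notation MI := ('X_{1..D}).

Definition ev (p : 'rV[C]_D) (P : Pol) : C := meval (fun i => p 0 i) P.

Definition inZ (Q : Pol) (p : 'rV[C]_D) : Prop := ev p Q = 0.

Definition mcoprime (Q1 Q2 : Pol) : Prop :=
  forall d : Pol, (exists a, Q1 = d * a) -> (exists b, Q2 = d * b) ->
    (msize d <= 1)%N.

Definition lin_functional (L : Pol -> C) : Prop :=
  forall (a : C) (p q : Pol), L (a *: p + q) = a * L p + L q.

(* block truncation of the moment matrix G = <L, chi chi^T>:
   rows/columns indexed by the multi-indices of length < n *)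
Definition mom (L : Pol -> C) (n : nat) : 'M[C]_(Nm1 D n) :=
  \matrix_(i, j) L ('X_[nth 0%MM (low D n) i] * 'X_[nth 0%MM (low D n) j]).

Definition quasi_definite (L : Pol -> C) : Prop :=
  forall n : nat, mom L n \in unitmx.

(* The monic orthogonal polynomial P_alpha (entry alpha of P = S chi), given
   explicitly by the Gauss-Borel (Schur complement) formula
     P_[k] = chi_[k] - G_{[k],<k} (G_{<k,<k})^{-1} chi_{<k},   k = |alpha|. *)
Definition mop (L : Pol -> C) (al : MI) : Pol :=
  let n := mdeg al in
  'X_[al] - \sum_(i < Nm1 D n) \sum_(j < Nm1 D n)
     (L ('X_[al] * 'X_[nth 0%MM (low D n) i]) * (invmx (mom L n)) i j)
        *: 'X_[nth 0%MM (low D n) j].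

Definition Pcol (L : Pol -> C) (k : nat) (x : 'rV[C]_D) : 'cV[C]_(bsz D k) :=
  \col_(i < bsz D k) ev x (mop L (nth 0%MM (blk D k) i)).

(* H_[k] = <L, P_[k] chi_[k]^T> (= <L, P_[k] P_[k]^T>) *)
Definition Hblk (L : Pol -> C) (k : nat) : 'M[C]_(bsz D k) :=
  \matrix_(i, j) L (mop L (nth 0%MM (blk D k) i) * 'X_[nth 0%MM (blk D k) j]).

Definition Rent (Lc L : Pol -> C) (al be : MI) : C := Lc (mop L al * 'X_[be]).

(* entry (alpha, beta) of Q(Lambda) = sum_gamma Q_gamma Lambda^gamma, where
   (Lambda^gamma)_{alpha,beta} = delta_{alpha+gamma, beta} *)
Definition specQ (Q : Pol) (al be : MI) : C :=
  \sum_(g <- msupp Q) Q@_g * ((al + g)%MM == be)%:R.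

Definition specblk (Q : Pol) (k l : nat) : 'M[C]_(bsz D k, bsz D l) :=
  \matrix_(i, j) specQ Q (nth 0%MM (blk D k) i) (nth 0%MM (blk D l) j).

Definition rowsmx (rs : seq MI) (w : nat) (f : MI -> nat -> C)
  : 'M[C]_(size rs, w) := \matrix_(i, j) f (nth 0%MM rs i) j.

Definition colent (Lc L : Pol -> C) (bs : seq MI) (ps : seq 'rV[C]_D)
  (al : MI) (j : nat) : C :=
  if (j < size bs)%N then Rent Lc L al (nth 0%MM bs j)
  else ev (nth 0 ps (j - size bs)) (mop L al).

Definition CGmx (Lc L : Pol -> C) (bs : seq MI) (ps : seq 'rV[C]_D)
  (rs : seq MI) : 'M[C]_(size rs) :=
  rowsmx rs (size rs) (colent Lc L bs ps).

Definition CGfull (Lc L : Pol -> C) (bs : seq MI) (ps : seq 'rV[C]_D)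
  (rs : seq MI) (top : nat) (w : nat) (g : MI -> nat -> C)
  : 'M[C]_(size rs + bsz D top, size rs + w) :=
  block_mx (CGmx Lc L bs ps rs) (rowsmx rs w g)
           (rowsmx (blk D top) (size rs) (colent Lc L bs ps))
           (rowsmx (blk D top) w g).

End Algebraic.

Definition Theta_star (F : fieldType) (n h w : nat)
  (M : 'M[F]_(n + h, n + w)) : 'M[F]_(h, w) :=
  drsubmx M - dlsubmx M *m invmx (ulsubmx M) *m ursubmx M.

(* Fast decreasing (rapidly decreasing) distributions on R^D: the dual O'_c  *)
(* of the space O_c of smooth functions all of whose derivatives grow at     *)
(* most polynomially (inductive limit over k of the Frechet spaces O_{c,k}). *)
(* A complex distribution is represented by its (R-linear) action on real    *)
(* valued functions: T(f + i g) = T f + i T g.                               *)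
Section Distributions.
Variable R : realType.
Variable D : nat.
Local Notation V := ('rV[R]_D).

Definition ebasis (a : 'I_D) : V := delta_mx 0 a.

Definition pder (s : seq 'I_D) (f : V -> R) : V -> R :=
  foldr (fun a g => fun x => derive g x (ebasis a)) f s.

Definition smooth (f : V -> R) : Prop :=
  forall s : seq 'I_D, continuous (pder s f) /\
    forall (a : 'I_D) (x : V), derivable (pder s f) x (ebasis a).

Definition weight (k : nat) (x : V) : R := (1 + \sum_i (x 0 i) ^+ 2) ^+ k.

Definition OcK (k : nat) (f : V -> R) : Prop :=
  smooth f /\ forall s, exists M : R, forall x, `|pder s f x| <= M * weight k x.

Definition Oc (f : V -> R) : Prop := exists k, OcK k f.

Definition fast_decreasing (T : (V -> R) -> complex R) : Prop :=
  (forall (a : R) (f g : V -> R), Oc f -> Oc g ->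
     T (fun x => a * f x + g x) = (a%:C)%C * T f + T g) /\
  (* continuous on each O_{c,k}: bounded by a seminorm
     sup_{|s| <= m} sup_x |d^s f(x)| / (1+|x|^2)^k *)
  (forall k : nat, exists (c : R) (m : nat), forall f, OcK k f ->
     forall M : R,
       (forall s x, (size s <= m)%N -> `|pder s f x| <= M * weight k x) ->
       `|T f| <= ((c * M)%:C)%C).

Definition supported_in (U : set V) (f : V -> R) : Prop :=
  exists K : set V, compact K /\ (K `<=` U)%classic /\
    forall x, ~ K x -> f x = 0.

Definition in_supp (T : (V -> R) -> complex R) (x : V) : Prop :=
  forall U : set V, open U -> U x ->
    exists f, smooth f /\ supported_in U f /\ T f <> 0.

Definition realpt (x : V) : 'rV[complex R]_D := \row_i ((x 0 i)%:C)%C.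

Definition polyact (T : (V -> R) -> complex R) (P : mpoly D (complex R))
  : complex R :=
  T (fun x => complex.Re (ev (realpt x) P)) + 'i%C * T (fun x => complex.Im (ev (realpt x) P)).

End Distributions.

(* Main.v *)
Require Import Defs.
From HB Require Import structures.
From mathcomp Require Import all_boot all_order all_algebra.
From mathcomp Require Import mpoly.
From mathcomp Require Import all_classical all_reals all_analysis.
From mathcomp Require Import complex.
From mathcomp Require Import zify ring.
Import Order.TTheory GRing.Theory Num.Theory.
Import numFieldNormedType.Exports.
Local Open Scope ring_scope.
Set Implicit Arguments.
Unset Strict Implicit.
Unset Printing Implicit Defensive.

Lemma glex_mem D k s : (s \in glex_seq D k) = (size s == D) && (sumn s == k).
Proof.
elim: D k s => [|D IH] k s.
  rewrite /=; case: k => [|k] /=; first by rewrite inE; case: s.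
  by rewrite in_nil; case: s => //= x s; rewrite andbF.
have -> : glex_seq D.+1 k = flatten [seq [seq (k - a)%N :: t | t <- glex_seq D a] | a <- iota 0 k.+1] by [].
apply/flatten_mapP/idP.
  move=> [a]; rewrite mem_iota add0n ltnS => /andP [_ ak] /mapP [t].
  rewrite IH => /andP [/eqP st /eqP sa] ->.
  by rewrite /= st sa subnK // !eqxx.
case: s => [|x t] // /andP [st /eqP sk].
exists (sumn t); first by rewrite mem_iota add0n ltnS -sk leq_addl.
apply/mapP; exists t; first by rewrite IH -eqSS st eqxx.
by rewrite -sk addnK.
Qed.

Lemma flatten_map_uniq (S T : eqType) (A : S -> seq T) (s : seq S) :
  uniq s -> (forall x, x \in s -> uniq (A x)) ->
  (forall x y z, x \in s -> y \in s -> z \in A x -> z \in A y -> x = y) ->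
  uniq (flatten (map A s)).
Proof.
elim: s => [|x s IH] //= /andP [xs us] uA dA.
rewrite cat_uniq uA ?mem_head //= IH //; last 2 first.
- by move=> y ys; apply: uA; rewrite inE ys orbT.
- by move=> a b z ha hb; apply: dA; rewrite inE ?ha ?hb orbT.
rewrite andbT; apply/hasPn => z /flatten_mapP [y ys zy]; apply/negP => zx.
have exy : x = y by apply: (dA x y z); rewrite ?inE ?eqxx ?ys ?orbT.
by move: xs; rewrite exy ys.
Qed.

Lemma glex_uniq D k : uniq (glex_seq D k).
Proof.
elim: D k => [|D IH] k; first by rewrite /=; case: k.
have -> : glex_seq D.+1 k = flatten [seq [seq (k - a)%N :: t | t <- glex_seq D a] | a <- iota 0 k.+1] by [].
apply: flatten_map_uniq; first exact: iota_uniq.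
  by move=> a _; rewrite map_inj_uniq //; move=> ? ? [].
move=> a b z; rewrite !mem_iota !add0n !ltnS => /andP [_ ak] /andP [_ bk] /mapP [t _ ->] /mapP [t' _ [e _]].
by rewrite -(subKn ak) -(subKn bk) e.
Qed.

Lemma mdeg_mi D s : size s = D -> mdeg (mi_of_seq D s) = sumn s.
Proof.
move=> sD; rewrite mdegE.
rewrite (eq_bigr (fun i : 'I_D => nth 0%N s i)); last by move=> i _; rewrite mnmE.
by rewrite sumnE (big_nth 0%N) sD big_mkord.
Qed.

Lemma mi_surj D (a : 'X_{1..D}) :
  exists2 s, s \in glex_seq D (mdeg a) & a = mi_of_seq D s.
Proof.
exists [seq a i | i <- enum 'I_D].
  rewrite glex_mem size_map size_enum_ord eqxx /= sumnE big_map.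
  by rewrite mdegE big_enum.
apply/mnmP => i; rewrite mnmE (nth_map i) ?size_enum_ord //.
by rewrite nth_ord_enum.
Qed.

Lemma mi_inj D s1 s2 : size s1 = D -> size s2 = D ->
  mi_of_seq D s1 = mi_of_seq D s2 -> s1 = s2.
Proof.
move=> h1 h2 e; apply: (eq_from_nth (x0 := 0%N)); first by rewrite h1 h2.
move=> i hi; rewrite h1 in hi.
by have := congr1 (fun m : 'X_{1..D} => m (Ordinal hi)) e; rewrite !mnmE.
Qed.

Lemma blk_mem D k a : (a \in blk D k) = (mdeg a == k).
Proof.
apply/mapP/idP.
  by move=> [s]; rewrite glex_mem => /andP [/eqP sD /eqP sk] ->; rewrite mdeg_mi // sk.
by move=> /eqP <-; have [s hs e] := mi_surj a; exists s.
Qed.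

Lemma blk_uniq D k : uniq (blk D k).
Proof.
rewrite map_inj_in_uniq ?glex_uniq //.
move=> s1 s2; rewrite !glex_mem => /andP [/eqP h1 _] /andP [/eqP h2 _].
exact: mi_inj.
Qed.

Lemma low_mem D n a : (a \in low D n) = (mdeg a < n)%N.
Proof.
apply/flatten_mapP/idP.
  by move=> [j]; rewrite mem_iota add0n blk_mem => /andP [_ jn] /eqP ->.
by move=> h; exists (mdeg a); rewrite ?mem_iota ?add0n ?h ?blk_mem.
Qed.

Lemma low0 D : low D 0 = [::].
Proof. by []. Qed.

Lemma lowS D n : low D n.+1 = low D n ++ blk D n.
Proof. by rewrite /low -addn1 iotaD map_cat flatten_cat /= cats0. Qed.

Lemma low_mid D a b : (a <= b)%N -> low D b = low D a ++ mid D a b.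
Proof.
by move=> ab; rewrite /low /mid -{1}(subnKC ab) iotaD map_cat flatten_cat.
Qed.

Lemma mid_mem D a b al : (a <= b)%N -> (al \in mid D a b) = (a <= mdeg al < b)%N.
Proof.
move=> ab; apply/flatten_mapP/idP.
  by move=> [j]; rewrite mem_iota subnKC // blk_mem => jn /eqP ->.
by move=> h; exists (mdeg al); rewrite ?mem_iota ?subnKC ?h ?blk_mem.
Qed.

Lemma Nm1_le D a b : (a <= b)%N -> (Nm1 D a <= Nm1 D b)%N.
Proof. by move=> ab; rewrite /Nm1 (low_mid D ab) size_cat leq_addr. Qed.

Section Poly.
Variable R : rcfType.
Local Notation C := (complex R).
Variable D : nat.
Local Notation Pol := (mpoly D C).
Local Notation MI := ('X_{1..D}).

Definition lowd n (p : Pol) := forall m : MI, (n <= mdeg m)%N -> p@_m = 0.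

Lemma lowd0 n : lowd n 0.
Proof. by move=> m _; rewrite mcoeff0. Qed.

Lemma lowdD n p q : lowd n p -> lowd n q -> lowd n (p + q).
Proof. by move=> hp hq m h; rewrite mcoeffD hp ?hq ?addr0. Qed.

Lemma lowdN n p : lowd n p -> lowd n (- p).
Proof. by move=> hp m h; rewrite raddfN /= hp ?oppr0. Qed.

Lemma lowdB n p q : lowd n p -> lowd n q -> lowd n (p - q).
Proof. by move=> hp hq; apply: lowdD => //; apply: lowdN. Qed.

Lemma lowdZ n c p : lowd n p -> lowd n (c *: p).
Proof. by move=> hp m h; rewrite mcoeffZ hp ?mulr0. Qed.

Lemma lowd_sum n (I : Type) (r : seq I) (P : pred I) (F : I -> Pol) :
  (forall i, P i -> lowd n (F i)) -> lowd n (\sum_(i <- r | P i) F i).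
Proof.
move=> h; elim/big_rec: _ => [|i x Pi hx]; first exact: lowd0.
by apply: lowdD => //; apply: h.
Qed.

Lemma lowdX n (a : MI) : (mdeg a < n)%N -> lowd n 'X_[a].
Proof.
move=> h m hm; rewrite mcoeffX; case: eqP => // e.
by move: h; rewrite e ltnNge hm.
Qed.

Lemma lowd_mono n n' p : (n <= n')%N -> lowd n p -> lowd n' p.
Proof. by move=> nn h m hm; apply: h; apply: leq_trans hm. Qed.

Lemma lowd_mem n p m : lowd n p -> m \in msupp p -> (mdeg m < n)%N.
Proof.
move=> h; rewrite mcoeff_msupp; apply: contraR; rewrite -leqNgt => hm.
by rewrite h.
Qed.

Lemma lowdM a b p q : lowd a p -> lowd b q -> lowd (a + b).-1 (p * q).
Proof.
move=> hp hq m hm; apply/eqP; rewrite mcoeff_eq0; apply/negP.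
move=> /msuppM_le /allpairsP [[m1 m2] /= [h1 h2 e]].
have l1 := lowd_mem hp h1; have l2 := lowd_mem hq h2.
by move: hm; rewrite e mdegD; case: a b l1 l2 {hp hq h1 h2} => [|a] [|b] //=; lia.
Qed.

Lemma lowd_msize p : lowd (msize p) p.
Proof.
move=> m hm; apply/eqP; rewrite mcoeff_eq0; exact: msize_mdeg_ge.
Qed.

Lemma lowd_eq0 p : lowd 0 p -> p = 0.
Proof. by move=> h; apply/mpolyP => m; rewrite h // mcoeff0. Qed.

Lemma sum_coef (s : seq MI) (f : MI -> C) m : uniq s ->
  \sum_(b <- s) f b * (b == m)%:R = if m \in s then f m else 0.
Proof.
move=> us; case: ifP => ms.
  rewrite (bigD1_seq m) //= eqxx mulr1 big1 ?addr0 //.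
  by move=> b /negbTE ->; rewrite mulr0.
rewrite big_seq big1 // => b bs; case: eqP => [e|]; last by rewrite mulr0.
by move: ms; rewrite -e bs.
Qed.

Lemma coef_sumX (s : seq MI) (f : MI -> C) m : uniq s ->
  (\sum_(b <- s) f b *: 'X_[b])@_m = if m \in s then f m else 0.
Proof.
move=> us; rewrite raddf_sum /= -(sum_coef f m us).
by apply: eq_bigr => b _; rewrite mcoeffZ mcoeffX.
Qed.

Lemma mon_split n p : lowd n.+1 p ->
  lowd n (p - \sum_(a <- blk D n) p@_a *: 'X_[a]).
Proof.
move=> h m hm; rewrite mcoeffB coef_sumX ?blk_uniq // blk_mem.
case: eqP => [_|ne]; first by rewrite subrr.
by rewrite h ?subr0 // ltn_neqAle hm andbT eq_sym; apply/eqP.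
Qed.

Lemma mon_expand n p : lowd n p -> p = \sum_(a <- low D n) p@_a *: 'X_[a].
Proof.
elim: n p => [|n IH] p h; first by rewrite low0 big_nil; apply: lowd_eq0.
have h2 := mon_split h; have e := IH _ h2.
rewrite lowS big_cat /= -[p in LHS](subrK (\sum_(a <- blk D n) p@_a *: 'X_[a])).
congr (_ + _); rewrite {1}e big_seq [RHS]big_seq; apply: eq_bigr => a.
rewrite low_mem => ha; congr (_ *: _).
rewrite mcoeffB coef_sumX ?blk_uniq // blk_mem.
by rewrite (ltn_eqF ha) subr0.
Qed.

Section Lin.
Variable L : Pol -> C.
Hypothesis hL : lin_functional L.

Lemma linD p q : L (p + q) = L p + L q.
Proof. by have := hL 1 p q; rewrite scale1r mul1r. Qed.

Lemma lin0 : L 0 = 0.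
Proof.
have := linD 0 0; rewrite addr0 => /(congr1 (fun x => x - L 0)).
by rewrite subrr addrK => ->.
Qed.

Lemma linZ c p : L (c *: p) = c * L p.
Proof. by have := hL c p 0; rewrite addr0 lin0 addr0. Qed.

Lemma linN p : L (- p) = - L p.
Proof. by rewrite -scaleN1r linZ mulN1r. Qed.

Lemma linB p q : L (p - q) = L p - L q.
Proof. by rewrite linD linN. Qed.

Lemma lin_sum (I : Type) (r : seq I) (P : pred I) (F : I -> Pol) :
  L (\sum_(i <- r | P i) F i) = \sum_(i <- r | P i) L (F i).
Proof. exact: (big_morph L linD lin0). Qed.

Lemma mop_lowd (al : MI) : lowd (mdeg al) (mop L al - 'X_[al]).
Proof.
rewrite /mop /= addrAC subrr add0r; apply: lowdN.
apply: lowd_sum => i _; apply: lowd_sum => j _; apply: lowdZ; apply: lowdX.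
by rewrite -low_mem mem_nth.
Qed.

Lemma nth_low n (be : MI) : be \in low D n ->
  exists i0 : 'I_(Nm1 D n), be = nth 0%MM (low D n) i0.
Proof.
move=> h; have hi : (index be (low D n) < Nm1 D n)%N by rewrite index_mem.
by exists (Ordinal hi); rewrite /= nth_index.
Qed.

Lemma mop_orth (al be : MI) : mom L (mdeg al) \in unitmx ->
  (mdeg be < mdeg al)%N -> L (mop L al * 'X_[be]) = 0.
Proof.
move=> U hb; rewrite -low_mem in hb; have [i0 ->] := nth_low hb.
set n := mdeg al in U i0 *; set l := low D n.
rewrite /mop /= -/n -/l mulrBl linB mulr_suml lin_sum.
under eq_bigr => i _ do rewrite mulr_suml lin_sum.
under eq_bigr => i _ do under eq_bigr => j _ do rewrite -scalerAl linZ.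
have ->: \sum_(i < Nm1 D n) \sum_(j < Nm1 D n)
    L ('X_[al] * 'X_[nth 0%MM l i]) * invmx (mom L n) i j *
    L ('X_[nth 0%MM l j] * 'X_[nth 0%MM l i0]) =
  \sum_(i < Nm1 D n) L ('X_[al] * 'X_[nth 0%MM l i]) * (i == i0)%:R.
  apply: eq_bigr => i _.
  have -> : (i == i0)%:R = (invmx (mom L n) *m mom L n) i i0 by rewrite mulVmx // mxE.
  rewrite mxE mulr_sumr.
  by apply: eq_bigr => j _; rewrite !mxE mulrA.
rewrite (bigD1 i0) //= eqxx mulr1 big1 ?addr0 ?subrr //.
by move=> i /negbTE ->; rewrite mulr0.
Qed.

Lemma orth_poly (al : MI) p : mom L (mdeg al) \in unitmx ->
  lowd (mdeg al) p -> L (mop L al * p) = 0.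
Proof.
move=> U h; rewrite (mon_expand h) mulr_sumr lin_sum big_seq big1 // => a.
by rewrite low_mem => ha; rewrite -scalerAr linZ mop_orth // mulr0.
Qed.

Lemma mop_split n p : lowd n.+1 p ->
  lowd n (p - \sum_(a <- blk D n) p@_a *: mop L a).
Proof.
move=> h; have h2 := mon_split h.
have -> : p - \sum_(a <- blk D n) p@_a *: mop L a =
  (p - \sum_(a <- blk D n) p@_a *: 'X_[a]) -
  \sum_(a <- blk D n) p@_a *: (mop L a - 'X_[a]).
  rewrite [in RHS](eq_bigr _ (fun a _ => scalerBr _ _ _)) sumrB.
  by rewrite opprB addrA subrK.
apply: lowdB => //; rewrite big_seq; apply: lowd_sum => a; rewrite blk_mem => /eqP <-.
by apply: lowdZ; apply: mop_lowd.
Qed.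

Lemma mop_expand n p : lowd n p ->
  exists c : MI -> C, p = \sum_(a <- low D n) c a *: mop L a.
Proof.
elim: n p => [|n IH] p h.
  by exists (fun _ => 0); rewrite low0 big_nil; apply: lowd_eq0.
have [c e] := IH _ (mop_split h).
exists (fun a => if mdeg a == n then p@_a else c a).
rewrite lowS big_cat /= -[p in LHS](subrK (\sum_(a <- blk D n) p@_a *: mop L a)) e.
congr (_ + _); rewrite big_seq [RHS]big_seq; apply: eq_bigr => a.
  by rewrite low_mem => ha; rewrite (ltn_eqF ha).
by rewrite blk_mem => ->.
Qed.

Lemma zero_lemma n V : quasi_definite L -> lowd n V ->
  (forall be, be \in low D n -> L (V * 'X_[be]) = 0) -> V = 0.
Proof.
move=> qd h hz; have e := mon_expand h.
pose v : 'rV[C]_(Nm1 D n) := \row_j V@_(nth 0%MM (low D n) j).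
have vm : v *m mom L n = 0.
  apply/rowP => i; rewrite [RHS]mxE -(hz (nth 0%MM (low D n) i)) ?mem_nth //.
  transitivity (L ((\sum_(a <- low D n) V@_a *: 'X_[a]) * 'X_[nth 0%MM (low D n) i])); last by rewrite -e.
  rewrite mulr_suml lin_sum (big_nth 0%MM) big_mkord mxE.
  by apply: eq_bigr => j _; rewrite !mxE -scalerAl linZ.
have v0 : v = 0 by rewrite -(mulmxK (qd n) v) vm mul0mx.
rewrite e big_seq big1 // => a ha; have [j ->] := nth_low ha.
by have := congr1 (fun w : 'rV[C]_(Nm1 D n) => w 0 j) v0; rewrite !mxE => ->; rewrite scale0r.
Qed.
End Lin.
End Poly.

Lemma theta_key (F : fieldType) n h w (A : 'M[F]_n) (X : 'M[F]_(h, n))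
  (Grs : 'M[F]_(n, w)) (Gtop : 'M[F]_(h, w)) (c : 'rV[F]_n) (f : 'rV[F]_h) :
  A \in unitmx -> c *m A + f *m X = 0 ->
  c *m Grs + f *m Gtop = f *m Theta_star (block_mx A Grs X Gtop).
Proof.
move=> U e; have ec : c = - (f *m X) *m invmx A.
  by rewrite -(mulmxK U c); move/eqP: e; rewrite addr_eq0 => /eqP ->.
rewrite /Theta_star block_mxKdr block_mxKdl block_mxKul block_mxKur ec.
rewrite mulmxBr !mulNmx !mulmxA addrC. by [].
Qed.

Section Glue.
Variable R : rcfType.
Local Notation C := (complex R).
Variable D : nat.
Local Notation Pol := (mpoly D C).
Local Notation MI := ('X_{1..D}).

Lemma lin_mulX (L : Pol -> C) (Y : Pol) : lin_functional L ->
  lin_functional (fun p => L (p * Y)).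
Proof. by move=> hL a p q /=; rewrite mulrDl -scalerAl hL. Qed.

Lemma lin_ev (x : 'rV[C]_D) : lin_functional (ev x).
Proof. by move=> a p q; rewrite /ev mevalD mevalZ. Qed.

Variable u : Pol -> C.

Lemma eval_exp (rs : seq MI) top w (Phi : nat -> Pol -> C) (g : MI -> nat -> C)
  (c : MI -> C) W :
  (forall j, lin_functional (Phi j)) ->
  (forall a j, a \in rs ++ blk D top -> (j < w)%N -> g a j = Phi j (mop u a)) ->
  W = \sum_(a <- rs) c a *: mop u a + \sum_(a <- blk D top) W@_a *: mop u a ->
  forall j : 'I_w, Phi j W =
    ((\row_r c (nth 0%MM rs r)) *m rowsmx rs w g +
     (\row_t W@_(nth 0%MM (blk D top) t)) *m rowsmx (blk D top) w g) 0 j.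
Proof.
move=> hP hg e j; rewrite [in LHS]e (linD (hP j)) !(lin_sum (hP j)) !mxE.
rewrite (big_nth 0%MM) big_mkord [X in _ + X](big_nth 0%MM) big_mkord.
congr (_ + _); apply: eq_bigr => t _; rewrite !mxE (linZ (hP j)) hg //.
- by rewrite mem_cat mem_nth.
- by rewrite mem_cat mem_nth ?orbT.
Qed.

Definition Psi (Lc : Pol -> C) (bs : seq MI) (ps : seq 'rV[C]_D) (j : nat) (p : Pol) : C :=
  if (j < size bs)%N then Lc (p * 'X_[nth 0%MM bs j]) else ev (nth 0 ps (j - size bs)) p.

Lemma lin_Psi Lc bs ps j : lin_functional Lc -> lin_functional (Psi Lc bs ps j).
Proof.
move=> hL a p q; rewrite /Psi; case: ifP => _; first exact: lin_mulX.
exact: lin_ev.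
Qed.

Lemma colent_Psi Lc bs ps a j : colent Lc u bs ps a j = Psi Lc bs ps j (mop u a).
Proof. by []. Qed.

Lemma theta_apply Lc bs ps (rs : seq MI) top w (Phi : nat -> Pol -> C)
  (g : MI -> nat -> C) (c : MI -> C) W :
  lin_functional Lc ->
  CGmx Lc u bs ps rs \in unitmx ->
  W = \sum_(a <- rs) c a *: mop u a + \sum_(a <- blk D top) W@_a *: mop u a ->
  (forall j, (j < size rs)%N -> Psi Lc bs ps j W = 0) ->
  (forall j, lin_functional (Phi j)) ->
  (forall a j, a \in rs ++ blk D top -> (j < w)%N -> g a j = Phi j (mop u a)) ->
  forall j : 'I_w, Phi j W =
    ((\row_t W@_(nth 0%MM (blk D top) t)) *m
       Theta_star (CGfull Lc u bs ps rs top w g)) 0 j.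
Proof.
move=> hL U e hz hP hg j.
have key : (\row_r c (nth 0%MM rs r)) *m CGmx Lc u bs ps rs +
   (\row_t W@_(nth 0%MM (blk D top) t)) *m rowsmx (blk D top) (size rs) (colent Lc u bs ps) = 0.
  apply/rowP => i; rewrite [RHS]mxE.
  rewrite -(@eval_exp rs top (size rs) (Psi Lc bs ps) (colent Lc u bs ps) c W) //.
  - exact: hz.
  - by move=> ?; apply: lin_Psi.
rewrite (eval_exp hP hg e) /CGfull -(theta_key _ _ U key) //.
Qed.
End Glue.

Section Main.
Variable R : rcfType.
Local Notation C := (complex R).
Variable D : nat.
Local Notation Pol := (mpoly D C).
Local Notation MI := ('X_{1..D}).

Lemma lin_mulL (L : Pol -> C) (Y : Pol) : lin_functional L ->
  lin_functional (fun p => L (Y * p)).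
Proof. by move=> hL a p q /=; rewrite mulrDr -scalerAr hL. Qed.

Lemma lowd_mop (L : Pol -> C) (a : MI) : lowd (mdeg a).+1 (mop L a).
Proof.
rewrite -[mop L a](subrK 'X_[a]); apply: lowdD; last exact: lowdX.
exact: lowd_mono (leqnSn _) (mop_lowd L (al:=a)).
Qed.

Lemma coefQX (Q : Pol) (al be : MI) : (Q * 'X_[al])@_be = specQ Q al be.
Proof.
rewrite {1}(mpolyE Q) mulr_suml raddf_sum /specQ; apply: eq_bigr => g _.
by rewrite -scalerAl -mpolyXD /= mcoeffZ mcoeffX addmC.
Qed.

Variables (Q1 Q2 : Pol) (m1 m2 k : nat) (Lc : Pol -> C) (ps : seq 'rV[C]_D).
Hypothesis hLc : lin_functional Lc.
Hypothesis hQ1 : lowd m1.+1 Q1.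
Hypothesis hQ2 : lowd m2.+1 Q2.
Definition uu (P : Pol) := Lc (Q2 * P).
Definition uuh (P : Pol) := Lc (Q1 * P).
Local Notation u := uu.
Local Notation uh := uuh.
Hypothesis qu : quasi_definite u.
Hypothesis quh : quasi_definite uh.
Hypothesis hps : forall p, p \in ps -> ev p Q1 = 0.

Let lu : lin_functional u := lin_mulL Q2 hLc.
Let luh : lin_functional uh := lin_mulL Q1 hLc.

Definition al_ (i : 'I_(bsz D k)) : MI := nth 0%MM (blk D k) i.
Definition W (i : 'I_(bsz D k)) : Pol := Q1 * mop uh (al_ i).

Lemma mdeg_al i : mdeg (al_ i) = k.
Proof. by apply/eqP; rewrite -blk_mem mem_nth. Qed.

Lemma topcoef i (be : MI) : mdeg be = (k + m1)%N ->
  (W i)@_be = specQ Q1 (al_ i) be.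
Proof.
move=> hb; rewrite /W -[mop uh (al_ i)](subrK 'X_[al_ i]) mulrDr mcoeffD coefQX.
have := lowdM hQ1 (mop_lowd uh (al:=al_ i)); rewrite mdeg_al => h.
by rewrite h ?add0r // hb; lia.
Qed.

Lemma W_lowd i : lowd (k + m1).+1 (W i).
Proof.
have := lowdM hQ1 (lowd_mop uh (a:=al_ i)); rewrite mdeg_al => h.
by apply: (lowd_mono _ h); lia.
Qed.

Lemma exp_i i : exists c : MI -> C,
  W i = \sum_(a <- low D (k + m1)) c a *: mop u a +
        \sum_(a <- blk D (k + m1)) (W i)@_a *: mop u a.
Proof.
have [c e] := mop_expand u (mop_split u (W_lowd i)).
by exists c; rewrite -e subrK.
Qed.

Lemma exp_ii i : (m2 <= k)%N -> exists c : MI -> C,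
  W i = \sum_(a <- mid D (k - m2) (k + m1)) c a *: mop u a +
        \sum_(a <- blk D (k + m1)) (W i)@_a *: mop u a.
Proof.
move=> mk; have [c e] := exp_i i; exists c.
have km : (k - m2 <= k + m1)%N by lia.
rewrite (low_mid D km) big_cat /= in e.
set V := \sum_(a <- low D (k - m2)) _ in e.
set M := \sum_(a <- mid D _ _) _ in e.
set S := \sum_(a <- blk D _) _ in e.
suff V0 : V = 0 by rewrite {1}e V0 add0r.
apply: (zero_lemma lu qu (n := (k - m2)%N)).
  rewrite /V big_seq; apply: lowd_sum => a; rewrite low_mem => ha.
  by apply: lowdZ; apply: (lowd_mono _ (lowd_mop u (a:=a))).
move=> be; rewrite low_mem => hbe.
have hV : V = W i - M - S by rewrite {1}e [V + M + S]addrAC !addrK.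
have orthM : forall a, (k - m2 <= mdeg a)%N -> u (mop u a * 'X_[be]) = 0.
  by move=> a ha; apply: (mop_orth lu) => //; lia.
have h1 : u (M * 'X_[be]) = 0.
  rewrite /M mulr_suml (lin_sum lu) big_seq big1 // => a.
  rewrite mid_mem // => /andP [ha _].
  by rewrite -scalerAl (linZ lu) orthM ?mulr0.
have h2 : u (S * 'X_[be]) = 0.
  rewrite /S mulr_suml (lin_sum lu) big_seq big1 // => a.
  rewrite blk_mem => /eqP ha; rewrite -scalerAl (linZ lu) orthM ?mulr0 //; lia.
rewrite hV !mulrBl !(linB lu) h1 h2 !subr0 /W /uu.
have -> : Q2 * (Q1 * mop uh (al_ i) * 'X_[be]) = Q1 * (mop uh (al_ i) * (Q2 * 'X_[be])).
  by ring.
apply: (orth_poly luh); first by apply: quh.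
rewrite mdeg_al; apply: (lowd_mono _ (lowdM hQ2 (lowdX R (ltnSn (mdeg be))))); lia.
Qed.

Lemma Psi_zero (bs rs : seq MI) i j :
  (forall b, b \in bs -> (mdeg b < k)%N) ->
  size rs = (size bs + size ps)%N -> (j < size rs)%N ->
  Psi Lc bs ps j (W i) = 0.
Proof.
move=> hb sr hj; rewrite /Psi; case: ifP => hjb.
  rewrite /W -mulrA; apply: (mop_orth luh); first by apply: quh.
  by rewrite mdeg_al; apply: hb; rewrite mem_nth.
rewrite /W /ev mevalM; have -> : meval (fun i0 => (nth 0 ps (j - size bs)) 0 i0) Q1 = 0.
  apply: hps; rewrite mem_nth //; move/negbT: hjb; rewrite -leqNgt => hh; move: hh sr hj; set a1 := size bs; set a2 := size ps; set a3 := size rs; lia.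
by rewrite mul0r.
Qed.

Lemma gen (rs bs : seq MI) (w : nat) (Phi : nat -> Pol -> C) (g : MI -> nat -> C) :
  CGmx Lc u bs ps rs \in unitmx ->
  (forall i, exists c : MI -> C,
     W i = \sum_(a <- rs) c a *: mop u a +
           \sum_(a <- blk D (k + m1)) (W i)@_a *: mop u a) ->
  (forall i j, (j < size rs)%N -> Psi Lc bs ps j (W i) = 0) ->
  (forall j, lin_functional (Phi j)) ->
  (forall a j, a \in rs ++ blk D (k + m1) -> (j < w)%N -> g a j = Phi j (mop u a)) ->
  forall (i : 'I_(bsz D k)) (j : 'I_w),
    Phi j (W i) = (specblk Q1 k (k + m1) *m
                   Theta_star (CGfull Lc u bs ps rs (k + m1) w g)) i j.
Proof.
move=> U hexp hz hP hg i j; have [c e] := hexp i.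
rewrite (theta_apply hLc U e (hz i) hP hg) !mxE; apply: eq_bigr => t _.
rewrite !mxE topcoef //; apply/eqP; rewrite -blk_mem mem_nth //.
Qed.
End Main.

Unset Implicit Arguments.
Set Strict Implicit.

Theorem mainTheorem6 (R : realType) (D : nat)
  (T : ('rV[R]_D -> R) -> R[i])
  (Q1 Q2 : mpoly D R[i]) (m1 m2 : nat)
  (Lc : mpoly D R[i] -> R[i])
  (k : nat) (ps : seq 'rV[R[i]]_D) :
  fast_decreasing T ->
  Q1 != 0 -> Q2 != 0 ->
  m1 = (msize Q1).-1 -> m2 = (msize Q2).-1 ->
  mcoprime Q1 Q2 ->
  (forall x : 'rV[R]_D, in_supp T x -> ~ inZ Q2 (realpt x)) ->
  lin_functional Lc ->
  (forall P, Lc (Q2 * P) = polyact T P) ->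
  let u := polyact T in
  let uh := fun P => Lc (Q1 * P) in
  quasi_definite u -> quasi_definite uh ->
  size ps = (Nm1 D (k + m1) - Nm1 D k)%N -> uniq ps ->
  (forall p, p \in ps -> inZ Q1 p) ->
  let F := specblk Q1 k (k + m1) in
  (CGmx Lc u (low D k) ps (low D (k + m1)) \in unitmx ->
     (forall x : 'rV[R[i]]_D, ~ inZ Q1 x ->
        Pcol uh k x = (ev x Q1)^-1 *: (F *m Theta_star
          (CGfull Lc u (low D k) ps (low D (k + m1)) (k + m1) 1
             (fun al _ => ev x (mop u al))))) /\
     Hblk uh k = F *m Theta_star
          (CGfull Lc u (low D k) ps (low D (k + m1)) (k + m1) (bsz D k)
             (fun al j => Rent Lc u al (nth 0%MM (blk D k) j)))) /\
  (forall bs : seq 'X_{1..D},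
     (m2 <= k)%N ->
     size bs = (Nm1 D k - Nm1 D (k - m2))%N -> uniq bs ->
     all (fun be => (mdeg be < k)%N) bs ->
     CGmx Lc u bs ps (mid D (k - m2) (k + m1)) \in unitmx ->
     (forall x : 'rV[R[i]]_D, ~ inZ Q1 x ->
        Pcol uh k x = (ev x Q1)^-1 *: (F *m Theta_star
          (CGfull Lc u bs ps (mid D (k - m2) (k + m1)) (k + m1) 1
             (fun al _ => ev x (mop u al))))) /\
     Hblk uh k *m (specblk Q2 (k - m2) k)^T = F *m Theta_star
          (CGfull Lc u bs ps (mid D (k - m2) (k + m1)) (k + m1) (bsz D (k - m2))
             (fun al j => if mdeg al == (k - m2)%N
                          then u (mop u al * 'X_[nth 0%MM (blk D (k - m2)) j])
                          else 0)) /\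
     Hblk uh k = F *m Theta_star
          (CGfull Lc u bs ps (mid D (k - m2) (k + m1)) (k + m1) (bsz D k)
             (fun al j => Rent Lc u al (nth 0%MM (blk D k) j)))).
Proof.
move=> _ Q1n0 Q2n0 em1 em2 _ _ hLc hQ u uh qu quh sps _ hps0 F.
have eu : u = uu Q2 Lc by apply: funext => P; rewrite /u /uu hQ.
have euh : uh = uuh Q1 Lc by [].
rewrite /F; rewrite eu euh in qu quh *.
have hQ1 : lowd m1.+1 Q1.
  by rewrite em1 prednK ?lt0n ?msize_poly_eq0 //; exact: lowd_msize.
have hQ2 : lowd m2.+1 Q2.
  by rewrite em2 prednK ?lt0n ?msize_poly_eq0 //; exact: lowd_msize.
have hps : forall p, p \in ps -> ev p Q1 = 0 by move=> p /hps0.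
have lu : lin_functional (uu Q2 Lc) by apply: lin_mulL.
have luh : lin_functional (uuh Q1 Lc) by apply: lin_mulL.
have linX : forall Y, lin_functional (fun p => Lc (p * Y)) by move=> Y; apply: lin_mulX.
have Pcol_eq : forall rs bs, CGmx Lc (uu Q2 Lc) bs ps rs \in unitmx ->
  (forall i, exists c, W (k:=k) Q1 Lc i = \sum_(a <- rs) c a *: mop (uu Q2 Lc) a +
      \sum_(a <- blk D (k + m1)) (W (k:=k) Q1 Lc i)@_a *: mop (uu Q2 Lc) a) ->
  (forall i j, (j < size rs)%N -> Psi Lc bs ps j (W (k:=k) Q1 Lc i) = 0) ->
  forall x : 'rV[R[i]]_D, ~ inZ Q1 x ->
  Pcol (uuh Q1 Lc) k x = (ev x Q1)^-1 *: (specblk Q1 k (k + m1) *m Theta_star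
          (CGfull Lc (uu Q2 Lc) bs ps rs (k + m1) 1
             (fun al _ => ev x (mop (uu Q2 Lc) al)))).
  move=> rs bs U hexp hz x nx; apply/matrixP => i j; rewrite [LHS]mxE [RHS]mxE.
  rewrite -(gen hLc hQ1 (Phi := fun _ => ev x)
     (g := fun al _ => ev x (mop (uu Q2 Lc) al)) U hexp hz) //.
  - rewrite /W /ev mevalM mulKf //; apply/eqP; exact: nx.
  - by move=> ?; apply: lin_ev.
have Hblk_eq : forall rs bs, CGmx Lc (uu Q2 Lc) bs ps rs \in unitmx ->
  (forall i, exists c, W (k:=k) Q1 Lc i = \sum_(a <- rs) c a *: mop (uu Q2 Lc) a +
      \sum_(a <- blk D (k + m1)) (W (k:=k) Q1 Lc i)@_a *: mop (uu Q2 Lc) a) ->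
  (forall i j, (j < size rs)%N -> Psi Lc bs ps j (W (k:=k) Q1 Lc i) = 0) ->
  Hblk (uuh Q1 Lc) k = specblk Q1 k (k + m1) *m Theta_star
          (CGfull Lc (uu Q2 Lc) bs ps rs (k + m1) (bsz D k)
             (fun al j => Rent Lc (uu Q2 Lc) al (nth 0%MM (blk D k) j))).
  move=> rs bs U hexp hz; apply/matrixP => i j; rewrite [LHS]mxE.
  rewrite -(gen hLc hQ1 (Phi := fun j p => Lc (p * 'X_[nth 0%MM (blk D k) j]))
     (g := fun al j => Rent Lc (uu Q2 Lc) al (nth 0%MM (blk D k) j)) U hexp hz) //.
  by rewrite /W /uuh mulrA.
split.
  move=> U.
  have hexp := exp_i (m1 := m1) (k := k) Q2 Lc hQ1.
  have hz : forall i j, (j < size (low D (k + m1)))%N ->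
      Psi Lc (low D k) ps j (W (k:=k) Q1 Lc i) = 0.
    move=> i j hj; apply: (Psi_zero hLc quh hps (rs := low D (k + m1))) => //.
      by move=> b; rewrite low_mem.
    have := Nm1_le D (leq_addr m1 k); move: sps; rewrite /Nm1.
    set a1 := size (low D k); set a2 := size (low D (k + m1)); set a3 := size ps; lia.
  by split; [apply: Pcol_eq | apply: Hblk_eq].
move=> bs mk sbs _ allbs U.
have hexp : forall i, _ := fun i => exp_ii hLc hQ1 hQ2 qu quh i mk.
have hz : forall i j, (j < size (mid D (k - m2) (k + m1)))%N ->
    Psi Lc bs ps j (W (k:=k) Q1 Lc i) = 0.
  move=> i j hj; apply: (Psi_zero hLc quh hps (rs := mid D (k - m2) (k + m1))) => //.
    by move=> b hb; apply: (allP allbs).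
  have km : (k - m2 <= k + m1)%N by lia.
  have := size_cat (low D (k - m2)) (mid D (k - m2) (k + m1)).
  rewrite -low_mid //.
  have := Nm1_le D (leq_subr m2 k); have := Nm1_le D (leq_addr m1 k).
  move: sps sbs; rewrite /Nm1.
  set a1 := size (low D k); set a2 := size (low D (k + m1)); set a3 := size ps.
  set a4 := size (low D (k - m2)); set a5 := size bs; set a6 := size (mid _ _ _); lia.
split; first exact: Pcol_eq.
split; last exact: Hblk_eq.
have km : (k - m2 <= k + m1)%N by lia.
apply/matrixP => i j; rewrite [LHS]mxE.
set ga := nth 0%MM (blk D (k - m2)) j.
have hga : mdeg ga = (k - m2)%N by apply/eqP; rewrite -blk_mem mem_nth.
rewrite -(gen hLc hQ1 (Phi := fun j p => uu Q2 Lc (p * 'X_[nth 0%MM (blk D (k - m2)) j])) U hexp hz); last 2 first.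
- by move=> ?; apply: lin_mulX.
- move=> a jj ha hj; case: eqP => // hne; symmetry.
  apply: (mop_orth lu); first exact: qu.
  have hgj : mdeg (nth 0%MM (blk D (k - m2)) jj) = (k - m2)%N.
    by apply/eqP; rewrite -blk_mem mem_nth.
  rewrite hgj; move: ha; rewrite mem_cat mid_mem // blk_mem.
  by case/orP => [/andP [h1 _] | /eqP h1]; move: hne; lia.
rewrite -/ga.
set q := Q2 * 'X_[ga].
have hq : lowd k.+1 q.
  by apply: (lowd_mono _ (lowdM hQ2 (lowdX R (ltnSn (mdeg ga))))); lia.
have -> : uu Q2 Lc (W (k:=k) Q1 Lc i * 'X_[ga]) = uuh Q1 Lc (mop (uuh Q1 Lc) (al_ i) * q).
  by rewrite /uu /uuh /W /q; congr Lc; ring.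
rewrite -[q in RHS](subrK (\sum_(b <- blk D k) q@_b *: 'X_[b])) mulrDr (linD luh).
rewrite (orth_poly luh (al := al_ i)) ?mdeg_al; last 2 first.
- exact: quh.
- exact: mon_split hq.
rewrite add0r mulr_sumr (lin_sum luh) (big_nth 0%MM) big_mkord.
apply: eq_bigr => l _; rewrite !mxE -scalerAr (linZ luh) coefQX mulrC.
by [].
Qed.
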